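(* Let $X$ be a CAT(0) space, $T:X\to X$, $C\subseteq X$ nonempty and $\varphi:[0,\infty)\to[0,\infty)$ an increasing function vanishing only at $0$. If $T$ is uniformly firmly nonexpansive on $C$ with modulus $\varphi$, then $T$ is uniformly $(P_2)$ on $C$ with modulus $\varphi$.
   Context: A geodesic space $(X,d)$ is CAT(0) if for all $z\in X$, all geodesics $\gamma:[a,b]\to X$ and all $t\in[0,1]$, $d^2(z,\gamma((1-t)a+tb))\le(1-t)d^2(z,\gamma(a))+td^2(z,\gamma(b))-t(1-t)d^2(\gamma(a),\gamma(b))$; $(1-t)x+ty$ denotes the point at distance $t\,d(x,y)$ from $x$ on the unique geodesic from $x$ to $y$. $T$ is uniformly firmly nonexpansive on $C$ with modulus $\varphi$ if $T(C)\subseteq C$ and for all $x,y\in C$, $t\in[0,1]$: $d^2(Tx,Ty)\le d^2((1-t)x+tTx,(1-t)y+tTy)-2(1-t)\varphi(d(Tx,Ty))$. $T$ is uniformly $(P_2)$ on $C$ with modulus $\varphi$ if $T(C)\subseteq C$ and for all $x,y\in C$: $2d^2(Tx,Ty)\le d^2(x,Ty)+d^2(y,Tx)-d^2(x,Tx)-d^2(y,Ty)-2\varphi(d(Tx,Ty))$. *)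

(* Defs.v *)
From Stdlib Require Import Reals Lra ClassicalEpsilon.
Open Scope R_scope.

Definition is_metric {X : Type} (d : X -> X -> R) : Prop :=
  (forall x y, 0 <= d x y) /\
  (forall x y, d x y = 0 <-> x = y) /\
  (forall x y, d x y = d y x) /\
  (forall x y z, d x z <= d x y + d y z).

Definition is_geodesic {X : Type} (d : X -> X -> R) (gamma : R -> X) (a b : R) : Prop :=
  a <= b /\
  forall s t, a <= s <= b -> a <= t <= b -> d (gamma s) (gamma t) = Rabs (s - t).

Definition geodesic_space {X : Type} (d : X -> X -> R) : Prop :=
  is_metric d /\
  forall x y, exists a b gamma,
    is_geodesic d gamma a b /\ gamma a = x /\ gamma b = y.

Definition CAT0 {X : Type} (d : X -> X -> R) : Prop :=
  geodesic_space d /\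
  forall (z : X) (gamma : R -> X) (a b t : R),
    is_geodesic d gamma a b -> 0 <= t <= 1 ->
    (d z (gamma ((1 - t) * a + t * b)))^2 <=
      (1 - t) * (d z (gamma a))^2 + t * (d z (gamma b))^2
      - t * (1 - t) * (d (gamma a) (gamma b))^2.

(* (1-t)x + t y : the point at distance t d(x,y) from x on the (unique, in a
   CAT(0) space) geodesic from x to y; characterised metrically as the point z
   with d(x,z) = t d(x,y) and d(z,y) = (1-t) d(x,y). *)
Definition conv {X : Type} (d : X -> X -> R) (x y : X) (t : R) : X :=
  epsilon (inhabits x)
    (fun z => d x z = t * d x y /\ d z y = (1 - t) * d x y).

Definition modulus (phi : R -> R) : Prop :=
  (forall s, 0 <= s -> 0 <= phi s) /\
  (forall s t, 0 <= s -> s <= t -> phi s <= phi t) /\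
  (forall s, 0 <= s -> (phi s = 0 <-> s = 0)).

Definition maps_into {X : Type} (T : X -> X) (C : X -> Prop) : Prop :=
  forall x, C x -> C (T x).

Definition uniformly_firmly_nonexpansive {X : Type} (d : X -> X -> R)
  (T : X -> X) (C : X -> Prop) (phi : R -> R) : Prop :=
  maps_into T C /\
  forall x y t, C x -> C y -> 0 <= t <= 1 ->
    (d (T x) (T y))^2 <=
      (d (conv d x (T x) t) (conv d y (T y) t))^2
      - 2 * (1 - t) * phi (d (T x) (T y)).

Definition uniformly_P2 {X : Type} (d : X -> X -> R)
  (T : X -> X) (C : X -> Prop) (phi : R -> R) : Prop :=
  maps_into T C /\
  forall x y, C x -> C y ->
    2 * (d (T x) (T y))^2 <=
      (d x (T y))^2 + (d y (T x))^2 - (d x (T x))^2 - (d y (T y))^2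
      - 2 * phi (d (T x) (T y)).

(* Main.v *)
Require Import Defs.
From Stdlib Require Import Reals Lra Psatz ClassicalEpsilon.
Open Scope R_scope.

Lemma conv_cat0 (X : Type) (d : X -> X -> R) :
  CAT0 d -> forall x y w t, 0 <= t <= 1 ->
  (d w (conv d x y t))^2 <= (1 - t) * (d w x)^2 + t * (d w y)^2
      - t * (1 - t) * (d x y)^2.
Proof.
  intros [[[Hpos [Hz [Hsym Htri]]] Hgeo] Hcat] x y w t Ht.
  destruct (Hgeo x y) as [a [b [g [Hg [Ha Hb]]]]].
  pose proof Hg as [Hab Hgd].
  set (s := (1 - t) * a + t * b).
  assert (Hs : a <= s <= b) by (unfold s; nra).
  assert (HD : d x y = b - a).
  { rewrite <- Ha, <- Hb, Hgd by lra. rewrite Rabs_left1 by lra. lra. }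
  assert (H1 : d x (g s) = t * d x y).
  { rewrite <- Ha at 1. rewrite Hgd by lra. rewrite HD.
    rewrite Rabs_left1 by (unfold s; nra). unfold s; ring. }
  assert (H2 : d (g s) y = (1 - t) * d x y).
  { rewrite <- Hb at 1. rewrite Hgd by lra. rewrite HD.
    rewrite Rabs_left1 by (unfold s; nra). unfold s; ring. }
  assert (Hex : exists z, d x z = t * d x y /\ d z y = (1 - t) * d x y)
    by (exists (g s); split; assumption).
  pose proof (epsilon_spec (inhabits x) _ Hex) as [E1 E2].
  fold (conv d x y t) in E1, E2.
  set (z := conv d x y t) in *.
  assert (Hzm : z = g s).
  { apply Hz. pose proof (Hcat z g a b t Hg Ht) as C.
    fold s in C. rewrite Ha, Hb in C.
    rewrite (Hsym z x), E1, E2 in C.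
    pose proof (Hpos z (g s)).
    assert ((d z (g s))^2 <= 0) by nra. nra. }
  rewrite Hzm. unfold s. rewrite <- Ha, <- Hb. apply Hcat; assumption.
Qed.

Lemma small_le0 (a K : R) :
  (forall e, 0 < e <= 1 -> a <= e * K) -> a <= 0.
Proof.
  intros H. destruct (Rle_dec a 0) as [|Hn]; [assumption|].
  exfalso. assert (Ha : 0 < a) by lra.
  set (e := Rmin 1 (a / (Rabs K + 1))).
  assert (Hk : 0 <= Rabs K) by apply Rabs_pos.
  assert (He1 : e <= 1) by apply Rmin_l.
  assert (He2 : e <= a / (Rabs K + 1)) by apply Rmin_r.
  assert (He0 : 0 < e).
  { unfold e. apply Rmin_glb_lt; [lra|]. apply Rdiv_lt_0_compat; lra. }
  specialize (H e (conj He0 He1)).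
  assert (e * K <= e * Rabs K) by (apply Rmult_le_compat_l; [lra|apply Rle_abs]).
  assert (e * (Rabs K + 1) <= a).
  { apply (Rmult_le_compat_r (Rabs K + 1)) in He2; [|lra].
    unfold Rdiv in He2. rewrite Rmult_assoc, Rinv_l in He2 by lra. lra. }
  nra.
Qed.

Theorem proposition4p2 (X : Type) (d : X -> X -> R) (T : X -> X)
  (C : X -> Prop) (phi : R -> R) :
  CAT0 d ->
  (exists x0, C x0) ->
  modulus phi ->
  uniformly_firmly_nonexpansive d T C phi ->
  uniformly_P2 d T C phi.
Proof.
  intros Hc _ _ [HT Hf]. split; [exact HT|].
  intros x y Cx Cy.
  pose proof Hc as [[[Hpos [Hz [Hsym Htri]]] _] _].
  set (D := (d (T x) (T y))^2).
  set (q := (d x y)^2).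
  set (S := (d x (T y))^2 + (d y (T x))^2 - (d x (T x))^2 - (d y (T y))^2).
  set (p := phi (d (T x) (T y))).
  cut (2 * D - S + 2 * p <= 0); [unfold D, S, p; lra|].
  apply (small_le0 _ (D + q - S)).
  intros e He. set (t := 1 - e).
  assert (Ht : 0 <= t <= 1) by (unfold t; lra).
  pose proof (Hf x y t Cx Cy Ht) as F. fold D p in F.
  set (yt := conv d y (T y) t) in *.
  pose proof (conv_cat0 X d Hc x (T x) yt t Ht) as A1.
  pose proof (conv_cat0 X d Hc y (T y) x t Ht) as A2.
  pose proof (conv_cat0 X d Hc y (T y) (T x) t Ht) as A3.
  fold yt in A2, A3.
  rewrite (Hsym yt (conv d x (T x) t)) in A1.
  rewrite (Hsym yt x), (Hsym yt (T x)) in A1.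
  rewrite (Hsym (T x) y) in A3.
  fold D q in A1, A2, A3.
  assert (B : (d (conv d x (T x) t) yt)^2 <= (1-t)*((1 - t) * q + t * (d x (T y))^2 - t * (1 - t) * (d y (T y))^2)
     + t * ((1 - t) * (d y (T x))^2 + t * D - t * (1 - t) * (d y (T y))^2) - t * (1 - t) * (d x (T x))^2).
  { assert (t * (d (T x) yt)^2 <= t * ((1 - t) * (d y (T x))^2 + t * D - t * (1 - t) * (d y (T y))^2))
      by (apply Rmult_le_compat_l; lra).
    assert ((1-t) * (d x yt)^2 <= (1-t) * ((1 - t) * q + t * (d x (T y))^2 - t * (1 - t) * (d y (T y))^2))
      by (apply Rmult_le_compat_l; lra).
    lra. }
  assert (G : e * ((1 + t) * D) <= e * ((1 - t) * q + t * S - 2 * p)).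
  { unfold S. replace e with (1 - t) by (unfold t; ring). nra. }
  apply Rmult_le_reg_l in G; [|lra].
  unfold t in G. nra.
Qed.
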